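(* Let $k$ be a field and $f\in k[x_1,\dots,x_n]$ a polynomial of degree $d$. Assume that $f$ is computed by a straight-line program of length $N$. Then the limit complexity, in the category $\mathbf{AffVar}_k$ of affine algebraic varieties over $k$ with the basic morphisms listed below, of the zero-set $X\subset\mathbb{A}^n$ of $f$ is $O(N)$.
   Context: Basic morphisms in $\mathbf{AffVar}_k$ (each of unit cost): multiplication by $c$, $\mathbb{A}^1\xrightarrow{c}\mathbb{A}^1$, for each $c\in k$; addition $\mathbb{A}^1\times\mathbb{A}^1\xrightarrow{+}\mathbb{A}^1$; multiplication $\mathbb{A}^1\times\mathbb{A}^1\xrightarrow{\times}\mathbb{A}^1$; the two projections $\pi_1,\pi_2:\mathbb{A}^1\times\mathbb{A}^1\to\mathbb{A}^1$; $\mathbb{A}^1\to\mathbb{A}^0$; and $\mathbb{A}^0\xrightarrow{c}\mathbb{A}^1$ (the point $c$) for each $c\in k$. A straight-line program over $k$ in variables $x_1,\dots,x_n$ is a finite sequence of instructions, each of which introduces an input variable, a constant of $k$, or the sum or product of (or scalar multiple by a constant of) results of earlier instructions; its length is the number of instructions, and it computes $f$ if $f$ is the result of some instruction. Diagrams and limit complexity. A diagram of finite shape $I=(V,E,s,t)$ assigns objects to vertices and morphisms $D(e):D(s(e))\to D(t(e))$ to edges (no commutativity required); subdiagrams are restrictions to full subgraphs. A limit computation with basic morphisms $\mathcal{A}$ is a sequence $(D_0,\dots,D_s)$ where $D_0$ consists only of basic morphisms, each $D_i$ ($i\ge1$) is obtained from $D_{i-1}$ by choosing a full subgraph $J_i$,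 adding a new vertex $v_i$ carrying a limit of $D_{i-1}|_{J_i}$ and edges from $v_i$ to each vertex of $J_i$ carrying the limit cone morphisms, subject to constructivity: if $v_i$ lies in $J_j$ for $j>i$ then $J_i\subseteq J_j$. It computes an object $X$ if an object isomorphic to $X$ appears in $D_s$. Its cost is $s$ plus the number of edges of $D_0$. The limit complexity of $X$ is the minimum cost of a limit computation computing $X$. *)

(* Defs.v *)
From HB Require Import structures.
From mathcomp Require Import all_boot all_order all_algebra.
From mathcomp Require Import mpoly.
Set Implicit Arguments. Unset Strict Implicit. Unset Printing Implicit Defensive.
Import GRing.Theory.
Local Open Scope ring_scope.

Section AffVar.
Variable k : fieldType.

(* An affine variety over k is presented as (n, I) with I a radical ideal of
   k[x_1..x_n]; morphisms (n,I) -> (m,J) are m-tuples of polynomials in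
   k[x_1..x_n] pulling J back into I, considered modulo I.  This is the
   opposite of the category of finitely generated reduced k-algebras.      *)
Record avar := AVar { adim : nat; aideal : {mpoly k[adim]} -> Prop }.
Arguments aideal : clear implicits.

Definition is_rad_ideal n (I : {mpoly k[n]} -> Prop) : Prop :=
  [/\ I 0,
      (forall p q, I p -> I q -> I (p + q)),
      (forall p q, I q -> I (p * q)) &
      (forall p m, I (p ^+ m) -> I p)].

Definition is_variety (X : avar) : Prop := is_rad_ideal (aideal X).

Definition rmor (X Y : avar) := (adim Y).-tuple {mpoly k[adim X]}.

Definition is_mor (X Y : avar) (f : rmor X Y) : Prop :=
  forall q, aideal Y q -> aideal X (q \mPo f).

Definition mor_eq (X Y : avar) (f g : rmor X Y) : Prop :=
  forall i, aideal X (tnth f i - tnth g i).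

Definition mcomp (X Y Z : avar) (f : rmor X Y) (g : rmor Y Z) : rmor X Z :=
  [tuple (tnth g i) \mPo f | i < adim Z].

Definition mid (X : avar) : rmor X X := [tuple 'X_i | i < adim X].

Definition avar_iso (X Y : avar) : Prop :=
  exists (f : rmor X Y) (g : rmor Y X),
    [/\ is_mor f, is_mor g, mor_eq (mcomp f g) (mid X) & mor_eq (mcomp g f) (mid Y)].

Definition zero_ideal n : {mpoly k[n]} -> Prop := fun q => q = 0.
Definition A0 : avar := AVar (@zero_ideal 0).
Definition A1 : avar := AVar (@zero_ideal 1).
Definition A2 : avar := AVar (@zero_ideal 2).

Definition x0_1 : {mpoly k[1]} := 'X_(@ord0 0).
Definition x0_2 : {mpoly k[2]} := 'X_(@ord0 1).
Definition x1_2 : {mpoly k[2]} := 'X_(@ord_max 1).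

Definition b_scal (c : k) : rmor A1 A1 := [tuple c *: x0_1].
Definition b_add : rmor A2 A1 := [tuple x0_2 + x1_2].
Definition b_mul : rmor A2 A1 := [tuple x0_2 * x1_2].
Definition b_pi1 : rmor A2 A1 := [tuple x0_2].
Definition b_pi2 : rmor A2 A1 := [tuple x1_2].
Definition b_bang : rmor A1 A0 := [tuple].
Definition b_pt (c : k) : rmor A0 A1 := [tuple c%:MP].

Inductive basic : forall X Y : avar, rmor X Y -> Prop :=
  | Bscal c : basic (b_scal c)
  | Badd : basic b_add
  | Bmul : basic b_mul
  | Bpi1 : basic b_pi1
  | Bpi2 : basic b_pi2
  | Bbang : basic b_bang
  | Bpt c : basic (b_pt c).

Definition basic_obj (X : avar) : Prop := X = A0 \/ X = A1 \/ X = A2.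

(* A limit computation (D_0, ..., D_s) is encoded by its final diagram D_s:
   vertices 0..lc_m-1 are those of D_0; vertex lc_m + i is the vertex v_{i+1}
   added at step i+1 (i < lc_s).  D_0's edges are lc_edges (shape edges
   (a,b) carrying a morphism obj a -> obj b); step i+1 chooses the full
   subgraph on the vertex set lc_J i (of D_i) and adds, for each j in lc_J i,
   an edge lc_m+i -> j carrying the cone morphism lc_leg i j.              *)
Record limcomp := LimComp {
  lc_m : nat;
  lc_s : nat;
  lc_obj : nat -> avar;
  lc_edges : seq {ab : nat * nat & rmor (lc_obj ab.1) (lc_obj ab.2)};
  lc_J : nat -> pred nat;
  lc_leg : forall (i j : nat), rmor (lc_obj (lc_m + i)) (lc_obj j)
}.

Section LC.
Variable L : limcomp.
Local Notation m := (lc_m L).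
Local Notation obj := (lc_obj L).
Local Notation J := (lc_J L).

Definition is_cone (i : nat) (X : avar) (mu : forall j, rmor X (obj j)) : Prop :=
  [/\ (forall j, J i j -> is_mor (mu j)),
      (forall e, e \in lc_edges L -> J i (projT1 e).1 -> J i (projT1 e).2 ->
         mor_eq (mcomp (mu (projT1 e).1) (projT2 e)) (mu (projT1 e).2)) &
      (forall i' j, i' < i -> J i (m + i') -> J i' j -> J i j ->
         mor_eq (mcomp (mu (m + i')) (lc_leg L i' j)) (mu j))]%N.

Definition is_limit_step (i : nat) : Prop :=
  is_variety (obj (m + i)) /\
  is_cone i (lc_leg L i) /\
  forall (X : avar) (mu : forall j, rmor X (obj j)),
    is_variety X -> is_cone i mu ->
    exists phi : rmor X (obj (m + i)),
      [/\ is_mor phi,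
          (forall j, J i j -> mor_eq (mcomp phi (lc_leg L i j)) (mu j)) &
          (forall phi' : rmor X (obj (m + i)), is_mor phi' ->
             (forall j, J i j -> mor_eq (mcomp phi' (lc_leg L i j)) (mu j)) ->
             mor_eq phi phi')].

Definition lc_valid : Prop :=
  [/\ (forall v, v < m -> basic_obj (obj v)),
      (forall e, e \in lc_edges L ->
         [/\ (projT1 e).1 < m, (projT1 e).2 < m & basic (projT2 e)]),
      (forall i j, i < lc_s L -> J i j -> j < m + i),
      (forall i, i < lc_s L -> is_limit_step i) &
      (forall i i', i < i' -> i' < lc_s L -> J i' (m + i) ->
         forall j, J i j -> J i' j)]%N.

Definition lc_cost : nat := (lc_s L + size (lc_edges L))%N.

Definition lc_computes (X : avar) : Prop :=
  exists v, (v < m + lc_s L)%N /\ avar_iso (obj v) X.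
End LC.

Definition limit_complexity_le (X : avar) (c : nat) : Prop :=
  exists L : limcomp, [/\ lc_valid L, lc_computes L X & (lc_cost L <= c)%N].

Definition zero_set n (f : {mpoly k[n]}) : avar :=
  AVar (fun q : {mpoly k[n]} => exists (e : nat) (g : {mpoly k[n]}), q ^+ e = g * f).

Inductive instr (n : nat) :=
  | IVar of 'I_n
  | IConst of k
  | IAdd of nat & nat
  | IMul of nat & nat
  | IScale of k & nat.

(* values of the instructions; references are to (0-based) earlier results *)
Fixpoint slp_vals_rev n (P : seq (instr n)) : seq {mpoly k[n]} :=
  match P with
  | [::] => [::]
  | ins :: P' => let vs := slp_vals_rev P' in
     let get a := nth 0 (rev vs) a in
     (match ins with
      | IVar i => 'X_i
      | IConst c => c%:MP
      | IAdd a b => get a + get b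
      | IMul a b => get a * get b
      | IScale c a => c *: get a
      end) :: vs
  end.

(* program is stored in order, first instruction first *)
Definition slp_values n (P : seq (instr n)) : seq {mpoly k[n]} :=
  rev (slp_vals_rev (rev P)).

Definition instr_ok n (pos : nat) (ins : instr n) : bool :=
  match ins with
  | IVar _ | IConst _ => true
  | IAdd a b | IMul a b => (a < pos) && (b < pos)
  | IScale _ a => a < pos
  end%N.

Definition slp_wf n (P : seq (instr n)) : bool :=
  all (fun p => instr_ok p.1 p.2) (zip (iota 0 (size P)) P).

Definition slp_computes n (P : seq (instr n)) (f : {mpoly k[n]}) : Prop :=
  slp_wf P /\ f \in slp_values P.

End AffVar.

(* Main.v *)
Require Import Defs.
From HB Require Import structures.
From mathcomp Require Import all_boot all_order all_algebra.
From mathcomp Require Import mpoly.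
From mathcomp Require Import zify ring.
Set Implicit Arguments. Unset Strict Implicit. Unset Printing Implicit Defensive.
Import GRing.Theory.


Section Ideals.
Local Open Scope ring_scope.
Variables (k : fieldType) (m : nat) (I : {mpoly k[m]} -> Prop).
Hypothesis HI : is_rad_ideal I.

Lemma id0 : I 0. Proof. by case: HI. Qed.
Lemma idD p q : I p -> I q -> I (p + q). Proof. by case: HI => _ h _ _; apply: h. Qed.
Lemma idMl p q : I q -> I (p * q). Proof. by case: HI => _ _ h _; apply: h. Qed.
Lemma idMr p q : I p -> I (p * q). Proof. by rewrite mulrC; apply: idMl. Qed.
Lemma idR p e : I (p ^+ e) -> I p. Proof. by case: HI => _ _ _ h; apply: h. Qed.
Lemma idN p : I p -> I (- p).
Proof. by move=> h; rewrite -mulN1r; apply: idMl. Qed.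
Lemma idB p q : I p -> I q -> I (p - q).
Proof. by move=> hp hq; apply: idD => //; apply: idN. Qed.
Lemma idZ (c : k) p : I p -> I (c *: p).
Proof. by move=> h; rewrite -mul_mpolyC; apply: idMl. Qed.
Lemma idE p q : p = q -> I (p - q).
Proof. by move=> ->; rewrite subrr; apply: id0. Qed.
Lemma idT a b c : I (a - b) -> I (b - c) -> I (a - c).
Proof. move=> h1 h2; have -> : a - c = (a - b) + (b - c) by ring. by apply: idD. Qed.
Lemma idS a b : I (a - b) -> I (b - a).
Proof. by move=> h; rewrite -opprB; apply: idN. Qed.
Lemma idEq p q : p = q -> I p -> I q. Proof. by move=> ->. Qed.
End Ideals.

Section Zset.
Local Open Scope ring_scope.
Variables (k : fieldType) (n : nat) (f : {mpoly k[n]}).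

Lemma zero_set_rad : is_variety (zero_set f).
Proof.
split => /=.
- by exists 1%N, 0; rewrite expr1 mul0r.
- move=> p q [a [g Hg]] [b [h Hh]].
  exists (a + b)%N, (\sum_(i < (a + b).+1) (if (b <= i)%N then p ^+ (a + b - i) * (h * q ^+ (i - b)) else p ^+ (a + b - i - a) * g * q ^+ i) *+ 'C(a + b, i)).
  rewrite exprDn big_distrl /=; apply: eq_bigr => i _; rewrite mulrnAl; congr (_ *+ _).
  case: ifP => hi.
  + have -> : q ^+ i = q ^+ b * q ^+ (i - b) by rewrite -exprD subnKC.
    rewrite Hh; ring.
  + have -> : p ^+ (a + b - i) = p ^+ a * p ^+ (a + b - i - a).
      rewrite -exprD subnKC //.
      have := ltn_ord i; lia.
    rewrite Hg; ring.
- move=> p q [a [g Hg]]; exists a, (p ^+ a * g).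
  by rewrite exprMn Hg mulrA.
- move=> p e [a [g Hg]]; exists (e * a)%N, g.
  by rewrite exprM.
Qed.
End Zset.


Inductive kind := K0 | K1 | K2.
Inductive desc (k : fieldType) := DScal of k | DAdd | DMul | DPi1 | DPi2 | DPt of k.

Section Generic.
Local Open Scope ring_scope.
Variable k : fieldType.

Definition kobj (kd : kind) : avar k :=
  match kd with K0 => A0 k | K1 => A1 k | K2 => A2 k end.

Definition xv m (j : nat) : {mpoly k[m]} :=
  if insub j is Some i then 'X_i else 0.

Lemma xvE m (i : 'I_m) : xv m i = 'X_i.
Proof. by rewrite /xv valK. Qed.

Lemma xv_comp m l j (t : m.-tuple {mpoly k[l]}) : xv m j \mPo t = t`_j.
Proof.
rewrite /xv; case: insubP => [i _ <-|hj]; first by rewrite comp_mpolyXU.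
by rewrite comp_mpoly0 nth_default // size_tuple leqNgt.
Qed.

Definition body m (d : desc k) : {mpoly k[m]} :=
  match d with
  | DScal c => c *: xv m 0 | DAdd => xv m 0 + xv m 1 | DMul => xv m 0 * xv m 1
  | DPi1 => xv m 0 | DPi2 => xv m 1 | DPt c => c%:MP end.

Definition evald m (d : desc k) (t : seq {mpoly k[m]}) : {mpoly k[m]} :=
  match d with
  | DScal c => c *: t`_0 | DAdd => t`_0 + t`_1 | DMul => t`_0 * t`_1
  | DPi1 => t`_0 | DPi2 => t`_1 | DPt c => c%:MP end.

Lemma body_comp m l d (t : m.-tuple {mpoly k[l]}) : body m d \mPo t = evald d t.
Proof.
case: d => [c||||| c] /=; rewrite ?comp_mpolyZ ?comp_mpolyD ?rmorphM /= ?comp_mpolyC ?xv_comp //.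
Qed.

Lemma evald_ext m d (t t' : seq {mpoly k[m]}) :
  t`_0 = t'`_0 -> t`_1 = t'`_1 -> evald d t = evald d t'.
Proof. by move=> h0 h1; case: d => /= *; rewrite ?h0 ?h1. Qed.

Definition cm (X Y : avar k) (d : desc k) : rmor X Y :=
  [tuple body (adim X) d | _ < adim Y].

Definition castX (X X' Y : avar k) (H : X = X') (g : rmor X Y) : rmor X' Y :=
  eq_rect X (fun Z => rmor Z Y) g X' H.

Lemma mor_eqP (X Y : avar k) (g h : rmor X Y) :
  mor_eq g h <-> (forall i, (i < adim Y)%N -> @aideal _ X (g`_i - h`_i)).
Proof.
split=> H.
- by move=> i hi; have := H (Ordinal hi); rewrite !(tnth_nth 0).
- by move=> i; rewrite !(tnth_nth 0); apply: H.
Qed.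

Lemma mcomp_nth (X Y Z : avar k) (g : rmor X Y) (h : rmor Y Z) i :
  (i < adim Z)%N -> (mcomp g h)`_i = h`_i \mPo g.
Proof. by move=> hi; rewrite /mcomp -(tnth_nth 0 _ (Ordinal hi)) tnth_mktuple (tnth_nth 0). Qed.

Lemma edge_spec (X Xa Xb : avar k) (mua : rmor X Xa) (mub : rmor X Xb) d :
  adim Xb = 1%N ->
  mor_eq (mcomp mua (cm Xa Xb d)) mub <-> @aideal _ X (evald d mua - mub`_0).
Proof.
move=> hb; rewrite mor_eqP; have h0 : (0 < adim Xb)%N by rewrite hb.
have E : (mcomp mua (cm Xa Xb d))`_0 = evald d mua.
  by rewrite mcomp_nth // /cm -(tnth_nth 0 _ (Ordinal h0)) tnth_mktuple body_comp.
split; first by move=> H; rewrite -E; exact: H 0%N h0.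
move=> H i hi; have -> : i = 0%N by move: hi; rewrite hb; case: i.
by rewrite E.
Qed.

Lemma basic_scal (X Y : avar k) c : X = A1 k -> Y = A1 k -> basic (cm X Y (DScal c)).
Proof.
move=> -> ->.
have -> : cm (A1 k) (A1 k) (DScal c) = b_scal c.
  apply: eq_from_tnth => i; rewrite tnth_mktuple /=.
  by case: i => [[|//] ?]; rewrite /b_scal /= (xvE ord0).
constructor.
Qed.

Lemma basic_pt (X Y : avar k) c : X = A0 k -> Y = A1 k -> basic (cm X Y (DPt c)).
Proof.
move=> -> ->.
have -> : cm (A0 k) (A1 k) (DPt c) = b_pt c.
  by apply: eq_from_tnth => i; rewrite tnth_mktuple /=; case: i => [[|//] ?].
constructor.
Qed.

Lemma basic_2 (X Y : avar k) d : X = A2 k -> Y = A1 k ->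
  [\/ d = DAdd k, d = DMul k, d = DPi1 k | d = DPi2 k] -> basic (cm X Y d).
Proof.
move=> -> ->.
have E0 : xv 2 0 = x0_2 k by rewrite (xvE ord0).
have E1 : xv 2 1 = x1_2 k by rewrite (xvE ord_max).
have T : forall d (g : rmor (A2 k) (A1 k)) p, body 2 d = p -> g = [tuple p] -> cm (A2 k) (A1 k) d = g.
  move=> {}d g p hp ->; apply: eq_from_tnth => i; rewrite tnth_mktuple /=.
  by case: i => [[|//] ?]; rewrite hp.
case=> ->.
- by rewrite (T _ (b_add k) (x0_2 k + x1_2 k)) /= ?E0 ?E1 //; constructor.
- by rewrite (T _ (b_mul k) (x0_2 k * x1_2 k)) /= ?E0 ?E1 //; constructor.
- by rewrite (T _ (b_pi1 k) (x0_2 k)) /= ?E0 ?E1 //; constructor.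
- by rewrite (T _ (b_pi2 k) (x1_2 k)) /= ?E0 ?E1 //; constructor.
Qed.
End Generic.


Section SLP.
Local Open Scope ring_scope.
Variables (k : fieldType) (n : nat).

Definition evalI (g : nat -> {mpoly k[n]}) (x : instr k n) : {mpoly k[n]} :=
  match x with
  | IVar i => 'X_i | IConst c => c%:MP | IAdd a b => g a + g b
  | IMul a b => g a * g b | IScale c a => c *: g a end.

Lemma slp_values_rcons (Q : seq (instr k n)) x :
  slp_values (rcons Q x) = rcons (slp_values Q) (evalI (nth 0 (slp_values Q)) x).
Proof. by rewrite /slp_values rev_rcons /= rev_cons; case: x. Qed.

Lemma size_slp_values (Q : seq (instr k n)) : size (slp_values Q) = size Q.
Proof.
elim/last_ind: Q => [//|Q x IH].
by rewrite slp_values_rcons !size_rcons IH.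
Qed.

Lemma evalI_ext t x g g' : instr_ok t x -> (forall a, (a < t)%N -> g a = g' a) ->
  evalI g x = evalI g' x.
Proof.
case: x => //= [a b /andP[ha hb]|a b /andP[ha hb]|c a ha] H; by rewrite ?H.
Qed.

Definition dins : instr k n := IConst n 0.

Lemma val_spec (Q : seq (instr k n)) t : (t < size Q)%N ->
  (forall s, (s < size Q)%N -> instr_ok s (nth dins Q s)) ->
  nth 0 (slp_values Q) t = evalI (nth 0 (slp_values Q)) (nth dins Q t).
Proof.
elim/last_ind: Q t => [//|Q x IH] t.
rewrite size_rcons ltnS => ht wf.
have wfQ : forall s, (s < size Q)%N -> instr_ok s (nth dins Q s).
  by move=> s hs; have := wf s (ltnW hs); rewrite nth_rcons hs.
have ext : forall y s, (s <= size Q)%N -> instr_ok s y ->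
    evalI (nth 0 (slp_values (rcons Q x))) y = evalI (nth 0 (slp_values Q)) y.
  move=> y s hs ok; apply: (evalI_ext ok) => a ha.
  by rewrite slp_values_rcons nth_rcons size_slp_values (leq_trans ha hs).
have okt : instr_ok t (nth dins (rcons Q x) t) by apply: wf; rewrite ltnS.
rewrite (ext _ t) //.
rewrite slp_values_rcons !nth_rcons ?size_slp_values.
have [hlt|->] : (t < size Q)%N \/ t = size Q by lia.
- by rewrite hlt IH.
- by rewrite ltnn eqxx.
Qed.

Lemma wf_nth (Q : seq (instr k n)) : slp_wf Q ->
  forall s, (s < size Q)%N -> instr_ok s (nth dins Q s).
Proof.
move=> /(all_nthP (0%N, dins)) H s hs.
have := H s; rewrite size_zip size_iota minnn => /(_ hs).
by rewrite nth_zip ?size_iota //= nth_iota.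
Qed.
End SLP.


Section Constr.
Variables (k : fieldType) (n : nat) (P : seq (instr k n)) (f : {mpoly k[n]}).
Local Notation N := (size P).

Definition insP t := nth (@dins k n) P t.
Definition vlP t := nth 0%R (slp_values P) t.

Definition auxk (x : instr k n) :=
  match x with IAdd _ _ | IMul _ _ => K2 | _ => K0 end.

Definition kindf v :=
  if (v < N)%N then K1 else if (v < N + N)%N then auxk (insP (v - N))
  else if (v < N + N + n)%N then K1 else K0.

Local Notation mm := (N + N + n).+1.

Definition vobj v : avar k := if (v < mm)%N then kobj k (kindf v) else zero_set f.

Definition lp j : seq {mpoly k[n]} :=
  if (j < N)%N then [:: vlP j]
  else if (j < N + N)%N then
    (match insP (j - N) with IAdd a b | IMul a b => [:: vlP a; vlP b] | _ => [::] end)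
  else if (j < N + N + n)%N then [:: xv k n (j - (N + N))] else [::].

Lemma regions j : (j < mm)%N -> [\/ (j < N)%N, exists2 t, (t < N)%N & j = (N + t)%N,
  exists2 i, (i < n)%N & j = (N + N + i)%N | j = (N + N + n)%N].
Proof.
move=> h.
case: (ltnP j N) => h1; first by constructor 1.
case: (ltnP j (N + N)) => h2; first by constructor 2; exists (j - N)%N; lia.
case: (ltnP j (N + N + n)) => h3; first by constructor 3; exists (j - (N + N))%N; lia.
constructor 4; lia.
Qed.

Lemma objY j : (j < N)%N -> vobj j = A1 k.
Proof. move=> h; rewrite /vobj /kindf; repeat case: ifP => ?; rewrite ?addKn //; exfalso; lia. Qed.
Lemma objW t : (t < N)%N -> vobj (N + t) = kobj k (auxk (insP t)).
Proof. move=> h; rewrite /vobj /kindf; repeat case: ifP => ?; rewrite ?addKn //; exfalso; lia. Qed.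
Lemma objX i : (i < n)%N -> vobj (N + N + i) = A1 k.
Proof. move=> h; rewrite /vobj /kindf; repeat case: ifP => ?; rewrite ?addKn //; exfalso; lia. Qed.
Lemma objZ : vobj (N + N + n) = A0 k.
Proof. rewrite /vobj /kindf; repeat case: ifP => ?; rewrite ?addKn //; exfalso; lia. Qed.
Lemma objO j : (mm <= j)%N -> vobj j = zero_set f.
Proof. move=> h; rewrite /vobj /kindf; repeat case: ifP => ?; rewrite ?addKn //; exfalso; lia. Qed.

Lemma lpY j : (j < N)%N -> lp j = [:: vlP j].
Proof. move=> h; rewrite /lp; repeat case: ifP => ?; rewrite ?addKn //; exfalso; lia. Qed.
Lemma lpW t : (t < N)%N -> lp (N + t) =
   match insP t with IAdd a b | IMul a b => [:: vlP a; vlP b] | _ => [::] end.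
Proof. move=> h; rewrite /lp; repeat case: ifP => ?; rewrite ?addKn //; exfalso; lia. Qed.
Lemma lpX i : (i < n)%N -> lp (N + N + i) = [:: xv k n i].
Proof. move=> h; rewrite /lp; repeat case: ifP => ?; rewrite ?addKn //; exfalso; lia. Qed.
Lemma lpZ : lp (N + N + n) = [::].
Proof. rewrite /lp; repeat case: ifP => ?; rewrite ?addKn //; exfalso; lia. Qed.
Lemma lpO j : (mm <= j)%N -> lp j = [::].
Proof. move=> h; rewrite /lp; repeat case: ifP => ?; rewrite ?addKn //; exfalso; lia. Qed.

Lemma size_lp j : (size (lp j) <= adim (vobj j))%N.
Proof.
case: (ltnP j mm) => h; last by rewrite lpO.
case: (regions h) => [hj|[t ht ->]|[i hi ->]|->].
- by rewrite lpY // objY.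
- by rewrite lpW // objW //; case: (insP t).
- by rewrite lpX // objX.
- by rewrite lpZ.
Qed.

Definition legb j : rmor (zero_set f) (vobj j) :=
  [tuple nth 0%R (lp j) i | i < adim (vobj j)].

Lemma nth_legbase j i : nth 0%R (legb j) i = nth 0%R (lp j) i.
Proof.
case: (ltnP i (adim (vobj j))) => h.
  by rewrite -(tnth_nth 0%R _ (Ordinal h)) tnth_mktuple.
by rewrite !nth_default ?size_tuple // (leq_trans (size_lp j) h).
Qed.

Lemma Hobj i : zero_set f = vobj (mm + i).
Proof. rewrite /vobj /kindf; repeat case: ifP => ?; rewrite ?addKn //; exfalso; lia. Qed.

Definition leg i j : rmor (vobj (mm + i)) (vobj j) := castX (Hobj i) (legb j).

Definition E := {ab : nat * nat & rmor (vobj ab.1) (vobj ab.2)}.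
Definition mkEdge a b d : E := existT (fun ab : nat * nat => rmor (vobj ab.1) (vobj ab.2)) (a, b) (cm (vobj a) (vobj b) d).

Definition edgesT t : seq E :=
  match insP t with
  | IVar i => [:: mkEdge (N + N + i) t (DScal 1%R)]
  | IConst c => [:: mkEdge (N + t) t (DPt c)]
  | IAdd a b => [:: mkEdge (N + t) a (DPi1 k); mkEdge (N + t) b (DPi2 k); mkEdge (N + t) t (DAdd k)]
  | IMul a b => [:: mkEdge (N + t) a (DPi1 k); mkEdge (N + t) b (DPi2 k); mkEdge (N + t) t (DMul k)]
  | IScale c a => [:: mkEdge a t (DScal c)]
  end.

Definition oiP := index f (slp_values P).
Definition outE := mkEdge (N + N + n) oiP (DPt 0%R).

Definition edgesL : seq E := flatten [seq edgesT t | t <- iota 0 N] ++ [:: outE].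

Definition LC : limcomp k := @LimComp k mm 1 vobj edgesL (fun _ j => (j < mm)%N) leg.

End Constr.


Section Proofs.
Local Open Scope ring_scope.
Variables (k : fieldType) (n : nat) (P : seq (instr k n)) (f : {mpoly k[n]}).
Hypothesis Hwf : slp_wf P.
Hypothesis Hf : f \in slp_values P.
Local Notation N := (size P).
Local Notation mm := (N + N + n).+1.
Local Notation vobj := (vobj P f).
Local Notation insP := (insP P).
Local Notation vlP := (vlP P).
Local Notation mkEdge := (mkEdge P f).
Local Notation edgesL := (edgesL P f).
Local Notation edgesT := (edgesT P f).
Local Notation oiP := (oiP P f).

Lemma okt t : (t < N)%N -> instr_ok t (insP t).
Proof. exact: wf_nth. Qed.

Lemma vlE t : (t < N)%N -> vlP t = evalI vlP (insP t).
Proof. by move=> h; rewrite /vlP val_spec //; exact: wf_nth. Qed.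

Lemma oi_lt : (oiP < N)%N.
Proof. by rewrite /oiP -(size_slp_values P) index_mem. Qed.

Lemma f_vl : f = vlP oiP.
Proof. by rewrite /vlP /oiP nth_index. Qed.

Lemma in_edges t e : (t < N)%N -> e \in edgesT t -> e \in edgesL.
Proof.
move=> ht he; rewrite mem_cat; apply/orP; left.
by apply/flatten_mapP; exists t => //; rewrite mem_iota.
Qed.

Lemma edges_all (Q : E P f -> Prop) :
  (forall t, (t < N)%N -> forall e, e \in edgesT t -> Q e) -> Q (outE P f) ->
  forall e, e \in edgesL -> Q e.
Proof.
move=> H1 H2 e; rewrite mem_cat => /orP[/flatten_mapP[t ht he]|].
  by apply: (H1 t) => //; move: ht; rewrite mem_iota.
by rewrite inE => /eqP ->.
Qed.

Lemma edges_valid e : e \in edgesL ->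
  [/\ ((projT1 e).1 < mm)%N, ((projT1 e).2 < mm)%N & basic (projT2 e)].
Proof.
move: e; apply: (@edges_all (fun e => [/\ ((projT1 e).1 < mm)%N, ((projT1 e).2 < mm)%N & basic (projT2 e)])); last first.
  split => /=; [lia | have := oi_lt; lia | apply: basic_pt; [exact: objZ | exact: objY oi_lt]].
move=> t ht e; have ok := okt ht; rewrite /edgesT.
case Ei: (insP t) ok => [i|c|a b|a b|c a] /= ok; rewrite !inE.
- move=> /eqP -> /=; have := ltn_ord i; split; [lia|lia|]; apply: basic_scal; [exact: objX | exact: objY].
- move=> /eqP -> /=; split; [lia|lia|]; apply: basic_pt; [by rewrite objW // Ei | exact: objY].
- move: ok => /andP[ha hb].
  case/or3P => /eqP -> /=; split; try lia; apply: basic_2;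
    rewrite ?objW ?Ei ?objY //; try lia; by constructor.
- move: ok => /andP[ha hb].
  case/or3P => /eqP -> /=; split; try lia; apply: basic_2;
    rewrite ?objW ?Ei ?objY //; try lia; by constructor.
- move=> /eqP -> /=; split; [lia|lia|]; apply: basic_scal; apply: objY; lia.
Qed.

Definition econd (X : avar k) (mu : forall j, rmor X (vobj j)) :=
  forall e, e \in edgesL -> ((projT1 e).1 < mm)%N -> ((projT1 e).2 < mm)%N ->
    mor_eq (mcomp (mu (projT1 e).1) (projT2 e)) (mu (projT1 e).2).

Lemma use (X : avar k) (mu : forall j, rmor X (vobj j)) : econd mu ->
  forall t a b d, (t < N)%N -> mkEdge a b d \in edgesT t -> (b < N)%N ->
  @aideal _ X (evald d (mu a) - (mu b)`_0).
Proof.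
move=> H t a b d ht he hb; have he' := in_edges ht he.
have [ha hb' _] := edges_valid he'.
have Hb1 : adim (vobj b) = 1%N by rewrite objY.
by move: (H _ he' ha hb') => /(edge_spec _ _ _ Hb1).
Qed.

Lemma use_out (X : avar k) (mu : forall j, rmor X (vobj j)) : econd mu ->
  @aideal _ X (0%:MP - (mu oiP)`_0).
Proof.
move=> H; have he' : outE P f \in edgesL by rewrite mem_cat inE eqxx orbT.
have [ha hb' _] := edges_valid he'.
have Hb1 : adim (vobj oiP) = 1%N by rewrite objY // oi_lt.
by move: (H _ he' ha hb') => /(edge_spec _ _ _ Hb1).
Qed.

Lemma leg_econd : econd (legb P f).
Proof.
have ZI := zero_set_rad f.
move=> e he _ _; move: e he.
apply: (@edges_all (fun e => mor_eq (mcomp (legb P f (projT1 e).1) (projT2 e)) (legb P f (projT1 e).2))); last first.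
  have Hb1 : adim (vobj oiP) = 1%N by rewrite objY // oi_lt.
  apply/(edge_spec _ _ _ Hb1); rewrite ?nth_legbase lpY ?oi_lt //= -f_vl.
  by exists 1%N, (-1); rewrite sub0r expr1 mulN1r.
move=> t ht e; have ok := okt ht; rewrite /edgesT.
have vt := vlE ht.
case Ei: (insP t) ok vt => [i|c|a b|a b|c a] /= ok vt; rewrite !inE.
- move=> /eqP -> /=.
  have Hb1 : adim (vobj t) = 1%N by rewrite objY.
  apply/(edge_spec _ _ _ Hb1); rewrite (@evald_ext _ _ _ _ (lp P (N + N + i)%N)) ?nth_legbase //.
  by rewrite ?nth_legbase lpX // lpY //= vt xvE scale1r; apply: (idE ZI).
- move=> /eqP -> /=.
  have Hb1 : adim (vobj t) = 1%N by rewrite objY.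
  by apply/(edge_spec _ _ _ Hb1); rewrite /= nth_legbase lpY //= vt; apply: (idE ZI).
- move: ok => /andP[ha hb].
  case/or3P => /eqP -> /=;
  (have Hb1 : forall j, (j < N)%N -> adim (vobj j) = 1%N by move=> j hj; rewrite objY);
  (apply/(edge_spec _ _ _ (Hb1 _ _)); first lia);
  rewrite (@evald_ext _ _ _ _ (lp P (N + t)%N)) ?nth_legbase //;
  rewrite ?nth_legbase lpW // Ei /= !lpY //= ?vt; (try lia); (try by apply: (idE ZI)).
- move: ok => /andP[ha hb].
  case/or3P => /eqP -> /=;
  (have Hb1 : forall j, (j < N)%N -> adim (vobj j) = 1%N by move=> j hj; rewrite objY);
  (apply/(edge_spec _ _ _ (Hb1 _ _)); first lia);
  rewrite (@evald_ext _ _ _ _ (lp P (N + t)%N)) ?nth_legbase //;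
  rewrite ?nth_legbase lpW // Ei /= !lpY //= ?vt; (try lia); (try by apply: (idE ZI)).
- move=> /eqP -> /=.
  have Hb1 : adim (vobj t) = 1%N by rewrite objY.
  apply/(edge_spec _ _ _ Hb1); rewrite (@evald_ext _ _ _ _ (lp P a)) ?nth_legbase //.
  by rewrite ?nth_legbase !lpY //= ?vt; try lia; apply: (idE ZI).
Qed.

End Proofs.


Section Univ.
Local Open Scope ring_scope.
Variables (k : fieldType) (n : nat) (P : seq (instr k n)) (f : {mpoly k[n]}).
Hypothesis Hwf : slp_wf P.
Hypothesis Hf : f \in slp_values P.
Local Notation N := (size P).
Local Notation mm := (N + N + n).+1.
Local Notation vobj := (vobj P f).
Local Notation insP := (insP P).
Local Notation vlP := (vlP P).
Local Notation mkEdge := (mkEdge P f).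
Local Notation edgesL := (edgesL P f).
Local Notation edgesT := (edgesT P f).
Local Notation oiP := (oiP P f).

Variables (X : avar k) (mu : forall j, rmor X (vobj j)).
Hypothesis HX : is_variety X.
Hypothesis Hmu : econd mu.

Definition phi : n.-tuple {mpoly k[adim X]} := [tuple (mu (N + N + i)%N)`_0 | i < n].

Lemma phi_nth i (hi : (i < n)%N) : phi`_i = (mu (N + N + i)%N)`_0.
Proof. by rewrite (nth_mktuple _ _ (Ordinal hi)). Qed.

Lemma claim t : (t < N)%N -> @aideal _ X (vlP t \mPo phi - (mu t)`_0).
Proof.
elim/ltn_ind: t => t IH ht.
have U := use Hwf Hf Hmu ht.
rewrite vlE //; have ok := okt Hwf ht.
case Ei: (insP t) ok U => [i|c|a b|a b|c a] /= ok U.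
- have := U (N + N + i)%N t (DScal 1) (ltac:(by rewrite /edgesT Ei inE eqxx)) ht.
  by rewrite /= scale1r comp_mpolyXU phi_nth.
- have := U (N + t)%N t (DPt c) (ltac:(by rewrite /edgesT Ei inE eqxx)) ht.
  by rewrite /= comp_mpolyC.
- move: ok => /andP[ha hb].
  have e1 := U (N + t)%N a (DPi1 k) (ltac:(by rewrite /edgesT Ei !inE eqxx)) (ltn_trans ha ht).
  have e2 := U (N + t)%N b (DPi2 k) (ltac:(by rewrite /edgesT Ei !inE eqxx ?orbT)) (ltn_trans hb ht).
  have e3 := U (N + t)%N t (DAdd k) (ltac:(by rewrite /edgesT Ei !inE eqxx ?orbT)) ht.
  have IHa := IH a ha (ltn_trans ha ht); have IHb := IH b hb (ltn_trans hb ht).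
  rewrite /= in e1 e2 e3; rewrite comp_mpolyD.
  apply: (idEq _ (idD HX (idD HX (idB HX IHa e1) (idB HX IHb e2)) e3)); ring.
- move: ok => /andP[ha hb].
  have e1 := U (N + t)%N a (DPi1 k) (ltac:(by rewrite /edgesT Ei !inE eqxx)) (ltn_trans ha ht).
  have e2 := U (N + t)%N b (DPi2 k) (ltac:(by rewrite /edgesT Ei !inE eqxx ?orbT)) (ltn_trans hb ht).
  have e3 := U (N + t)%N t (DMul k) (ltac:(by rewrite /edgesT Ei !inE eqxx ?orbT)) ht.
  have IHa := IH a ha (ltn_trans ha ht); have IHb := IH b hb (ltn_trans hb ht).
  rewrite /= in e1 e2 e3; rewrite rmorphM /=.
  set A := vlP a \mPo phi; set B := vlP b \mPo phi.
  set w0 := (mu (N + t)%N)`_0; set w1 := (mu (N + t)%N)`_1.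
  have h1 := idB HX IHa e1; have h2 := idB HX IHb e2.
  apply: (idEq _ (idD HX (idD HX (idMr HX B h1) (idMl HX w0 h2)) e3)); rewrite /A /B /w0 /w1; ring.
- have ha : (a < t)%N by [].
  have e1 := U a t (DScal c) (ltac:(by rewrite /edgesT Ei !inE eqxx)) ht.
  have IHa := IH a ha (ltn_trans ha ht).
  rewrite /= in e1; rewrite comp_mpolyZ.
  apply: (idEq _ (idD HX (idZ HX c IHa) e1)); rewrite -!mul_mpolyC; ring.
Qed.

End Univ.


Section Lim.
Local Open Scope ring_scope.
Variables (k : fieldType) (n : nat) (P : seq (instr k n)) (f : {mpoly k[n]}).
Hypothesis Hwf : slp_wf P.
Hypothesis Hf : f \in slp_values P.
Local Notation N := (size P).
Local Notation mm := (N + N + n).+1.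
Local Notation vobj := (vobj P f).
Local Notation insP := (insP P).
Local Notation vlP := (vlP P).
Local Notation oiP := (oiP P f).
Local Notation legb := (legb P f).

Lemma obj_zero j : (j < mm)%N -> forall q : {mpoly k[adim (vobj j)]}, @aideal _ (vobj j) q -> q = 0.
Proof.
move=> hj; rewrite /vobj hj.
by case: (kindf P j) => q /= ->.
Qed.

Lemma is_mor_zero (Y : avar k) (g : rmor (zero_set f) Y) :
  (forall q, @aideal _ Y q -> q = 0) -> is_mor g.
Proof. by move=> H q /H ->; rewrite comp_mpoly0; exists 1%N, 0; rewrite expr1 mul0r. Qed.

Lemma limit_gen (Z : avar k) (H : zero_set f = Z) :
  is_variety Z /\
  is_cone (L := LC P f) 0 (fun j => castX H (legb j)) /\
  (forall (X : avar k) (mu : forall j, rmor X (vobj j)), is_variety X -> is_cone (L := LC P f) 0 mu ->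
    exists phi : rmor X Z,
      [/\ is_mor phi,
          (forall j, (j < mm)%N -> mor_eq (mcomp phi (castX H (legb j))) (mu j)) &
          (forall phi' : rmor X Z, is_mor phi' ->
             (forall j, (j < mm)%N -> mor_eq (mcomp phi' (castX H (legb j))) (mu j)) ->
             mor_eq phi phi')]).
Proof.
destruct H => /=.
split; first exact: zero_set_rad.
split.
  split => //.
  - by move=> j hj; apply: is_mor_zero; apply: obj_zero.
  - exact: (leg_econd Hwf Hf).
move=> X mu HX [_ Hmu _].
have Cl := claim Hwf Hf HX Hmu.
exists (phi mu); split.
- move=> q [e [g Hg]].
  apply: (idR HX (e := e)).
  rewrite -rmorphXn Hg rmorphM /=; apply: (idMl HX).
  have := idB HX (Cl _ (oi_lt Hf)) (use_out Hwf Hf Hmu).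
  by rewrite -f_vl // mpolyC0 sub0r opprK subrK.
- move=> j hj; apply/mor_eqP => i hi; rewrite mcomp_nth // nth_legbase; move: hi.
  case: (regions hj) => [hj'|[t ht ->]|[i' hi' ->]|->].
  + move=> hi; have -> : i = 0%N by move: hi; rewrite objY //; case: i.
    by rewrite lpY //; exact: Cl.
  + have U := use Hwf Hf Hmu ht.
    move=> hi; have {hi} : (i < adim (kobj k (auxk (insP t))))%N by rewrite -(objW f).
    rewrite lpW //; have ok := okt Hwf ht.
    case Ei: (insP t) ok U => [i'|c|a b|a b|c a] /= ok U; try by [].
    * move: ok => /andP[ha hb].
      have e1 := U (N + t)%N a (DPi1 k) (ltac:(by rewrite /edgesT Ei !inE eqxx)) (ltn_trans ha ht).
      have e2 := U (N + t)%N b (DPi2 k) (ltac:(by rewrite /edgesT Ei !inE eqxx ?orbT)) (ltn_trans hb ht).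
      rewrite /= in e1 e2.
      move=> hi; have [->|->] : i = 0%N \/ i = 1%N by lia.
      - exact: (idT HX (Cl a (ltn_trans ha ht)) (idS HX e1)).
      - exact: (idT HX (Cl b (ltn_trans hb ht)) (idS HX e2)).
    * move: ok => /andP[ha hb].
      have e1 := U (N + t)%N a (DPi1 k) (ltac:(by rewrite /edgesT Ei !inE eqxx)) (ltn_trans ha ht).
      have e2 := U (N + t)%N b (DPi2 k) (ltac:(by rewrite /edgesT Ei !inE eqxx ?orbT)) (ltn_trans hb ht).
      rewrite /= in e1 e2.
      move=> hi; have [->|->] : i = 0%N \/ i = 1%N by lia.
      - exact: (idT HX (Cl a (ltn_trans ha ht)) (idS HX e1)).
      - exact: (idT HX (Cl b (ltn_trans hb ht)) (idS HX e2)).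
  + move=> hi; have -> : i = 0%N by move: hi; rewrite objX //; case: i.
    rewrite lpX //= xv_comp phi_nth //; exact: (idE HX).
  + by move=> hi; have : (i < adim (A0 k))%N by rewrite -(objZ P f).
- move=> phi' _ H' i.
  have hi := ltn_ord i.
  have hj : (N + N + i < mm)%N by rewrite ltnS leq_add2l ltnW.
  have := H' (N + N + i)%N hj.
  have h0 : (0 < adim (vobj (N + N + i)))%N by rewrite objX.
  move/mor_eqP => /(_ 0%N h0).
  rewrite mcomp_nth // nth_legbase lpX //= xv_comp.
  rewrite !(tnth_nth 0) phi_nth //; exact: (idS HX).
Qed.
End Lim.


Lemma iso_refl (k : fieldType) (X : avar k) : is_variety X -> avar_iso X X.
Proof.
move=> HX.
have M : is_mor (mid X) by move=> q hq; rewrite /mid comp_mpoly_id.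
have Q : mor_eq (mcomp (mid X) (mid X)) (mid X).
  move=> i; apply: (idE HX); rewrite /mcomp tnth_mktuple /mid comp_mpoly_id //.
by exists (mid X), (mid X).
Qed.

Lemma size_edges (k : fieldType) (n : nat) (P : seq (instr k n)) (f : {mpoly k[n]}) s :
  (size (flatten [seq edgesT P f t | t <- s]) <= 3 * size s)%N.
Proof.
elim: s => [//|x s IH] /=; rewrite size_cat.
have : (size (edgesT P f x) <= 3)%N by rewrite /edgesT; case: (insP P x).
lia.
Qed.

Theorem theorem4p2 :
  exists C : nat, forall (k : fieldType) (n : nat) (f : {mpoly k[n]})
    (P : seq (instr k n)),
    slp_computes P f ->
    limit_complexity_le (zero_set f) (C * size P).
Proof.
exists 5%N => k n f P [Hwf Hf].
exists (LC P f); split.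
- split.
  + move=> v hv; rewrite /= /vobj hv; case: (kindf P v); rewrite /basic_obj /=; tauto.
  + exact: (edges_valid Hwf Hf).
  + by move=> i j _ /= hj; rewrite /= in hj *; lia.
  + by case=> [|//] _; exact: (limit_gen Hwf Hf (Hobj P f 0)).
  + move=> i i' /=; lia.
- exists (size P + size P + n).+1; split; first by rewrite /=; lia.
  rewrite /= /vobj ltnn; apply: iso_refl; exact: zero_set_rad.
- rewrite /lc_cost /= /edgesL size_cat /=.
  have := size_edges P f (iota 0 (size P)); rewrite size_iota.
  have : (0 < size P)%N.
    by move: Hf; rewrite -(size_slp_values P); case: (slp_values P).
  move=> h0; set x := size (flatten _); move=> h1; lia.
Qed.
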